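(* Let $N, J \ge 1$ be integers and let $F_1,\dots,F_J:\mathbb{R}_+^N\to\mathbb{R}_+$ be upper semicontinuous, concave functions that are homogeneous of degree 1. Let $x\in\mathbb{R}_+^N$. Then there exist $x_1,\dots,x_J\in\mathbb{R}_+^N$ with $\sum_{j=1}^J x_j=x$ attaining $$\max\Big\{\sum_{j=1}^J F_j(y_j): y_j\in\mathbb{R}_+^N \text{ for all } j,\ \sum_{j=1}^J y_j=x\Big\}$$ such that $x_j\neq 0$ for at most $N$ indices $j$.
   Context: Homogeneous of degree 1 means $F_j(\lambda x)=\lambda F_j(x)$ for all $\lambda\ge0$, $x\in\mathbb{R}_+^N$. *)

(* Defs.v *)
From HB Require Import structures.
From mathcomp Require Import all_boot all_order all_algebra.
From mathcomp Require Import reals.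
Set Implicit Arguments. Unset Strict Implicit. Unset Printing Implicit Defensive.
Import Order.TTheory GRing.Theory Num.Theory.
Local Open Scope ring_scope.

Definition nonneg_vec (R : realType) (N : nat) (x : 'rV[R]_N) : Prop :=
  forall i : 'I_N, 0 <= x ord0 i.

(* Functions R_+^N -> R_+ are represented as functions on 'rV_N; only their
   values on the orthant matter. *)
Definition nonneg_valued (R : realType) (N : nat) (F : 'rV[R]_N -> R) : Prop :=
  forall x, nonneg_vec x -> 0 <= F x.

(* upper semicontinuity of F on R_+^N (relative topology of the orthant;
   the sup-norm is used, all norms on R^N being equivalent) *)
Definition usc_orthant (R : realType) (N : nat) (F : 'rV[R]_N -> R) : Prop :=
  forall x, nonneg_vec x -> forall e : R, 0 < e ->
    exists2 d : R, 0 < d & forall y, nonneg_vec y ->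
      (forall i : 'I_N, `|y ord0 i - x ord0 i| < d) -> F y < F x + e.

Definition concave_orthant (R : realType) (N : nat) (F : 'rV[R]_N -> R) : Prop :=
  forall x y, nonneg_vec x -> nonneg_vec y -> forall t : R, 0 <= t <= 1 ->
    t * F x + (1 - t) * F y <= F (t *: x + (1 - t) *: y).

Definition homogeneous1 (R : realType) (N : nat) (F : 'rV[R]_N -> R) : Prop :=
  forall (l : R) x, 0 <= l -> nonneg_vec x -> F (l *: x) = l * F x.

(* Main.v *)
Require Import Defs.
From HB Require Import structures.
From mathcomp Require Import all_boot all_order all_algebra.
From mathcomp Require Import reals.
From mathcomp Require Import all_classical all_reals all_analysis.
From mathcomp Require Import lra.
Import Order.TTheory GRing.Theory Num.Theory.
Import numFieldNormedType.Exports.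
Set Implicit Arguments. Unset Strict Implicit. Unset Printing Implicit Defensive.
Local Open Scope ring_scope.


Lemma nbhs_rv_box (R : realType) (N : nat) (w0 : 'rV[R]_N) (d : R) : 0 < d ->
  nbhs w0 [set w | forall i, `|w ord0 i - w0 ord0 i| < d]%classic.
Proof.
move=> d0; exists (fun _ i => ball (w0 ord0 i) d).
  by move=> i j; rewrite (ord1 i); apply: nbhsx_ballx.
by move=> w /= H i; have := H ord0 i; rewrite /ball /= distrC.
Qed.

Lemma nbhs_rvT (T : topologicalType) (J : nat) (p : 'rV[T]_J) (P : 'I_J -> set T) :
  (forall j, nbhs (p ord0 j) (P j)) -> nbhs p [set v | forall j, P j (v ord0 j)]%classic.
Proof.
move=> H; exists (fun i j => P j) => //.
  by move=> i j; rewrite (ord1 i).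
by move=> v /= Hv j; apply: Hv.
Qed.

Lemma ltr_sum_ord (R : realType) (J : nat) (a b : 'I_J -> R) : (0 < J)%N ->
  (forall j, a j < b j) -> \sum_(j < J) a j < \sum_(j < J) b j.
Proof.
case: J a b => // J a b _ H; rewrite !big_ord_recl.
by apply: ltr_leD; [apply: H | apply: ler_sum => j _; apply/ltW/H].
Qed.

Lemma superadd (R : realType) (N : nat) (F : 'rV[R]_N -> R)
  (hc : concave_orthant F) (hh : homogeneous1 F) y z :
  nonneg_vec y -> nonneg_vec z -> F y + F z <= F (y + z).
Proof.
move=> hy hz.
have h2 : forall w : 'rV[R]_N, nonneg_vec w -> nonneg_vec (2 *: w).
  by move=> w hw i; rewrite mxE mulr_ge0 // hw.
have := hc (2 *: y) (2 *: z) (h2 _ hy) (h2 _ hz) (1/2) ltac:(apply/andP; split; lra).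
have e1 : (1/2 : R) * 2 = 1 by lra.
have e2 : (1 - 1/2 : R) * 2 = 1 by lra.
rewrite !hh // ?ler0n // !scalerA e1 e2 !scale1r => h; lra.
Qed.
Section Reduce.
Variables (R : realType) (N J : nat) (F : 'I_J -> 'rV[R]_N -> R)
  (hFhom : forall j, homogeneous1 (F j)) (x : 'rV[R]_N).

Definition feas (ys : 'I_J -> 'rV[R]_N) :=
  (forall j, nonneg_vec (ys j)) /\ \sum_(j < J) ys j = x.
Definition Gs (ys : 'I_J -> 'rV[R]_N) := \sum_(j < J) F j (ys j).
Definition opt xs := forall ys, feas ys -> Gs ys <= Gs xs.
Definition supp (xs : 'I_J -> 'rV[R]_N) := [set j : 'I_J | xs j != 0%R].

Lemma dep_exists (xs : 'I_J -> 'rV[R]_N) : (N < #|supp xs|)%N ->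
  exists c : 'I_J -> R, [/\ \sum_j c j *: xs j = 0, exists j, c j != 0
     & forall j, c j != 0 -> xs j != 0].
Proof.
move=> hN.
pose B := \matrix_(a < #|supp xs|, i < N) xs (enum_val a) ord0 i.
have hk : kermx B != 0.
  rewrite kermx_eq0 /row_free; apply/negP => /eqP hr.
  by have := rank_leq_col B; rewrite hr leqNgt hN.
have [a ha] : exists a, row a (kermx B) != 0.
  case: (boolP [exists a, row a (kermx B) != 0]) => [/existsP//|/existsPn H].
  move: hk; rewrite -[kermx B == 0]negbK => /negP []; apply/negPn/eqP.
  by apply/row_matrixP => a; rewrite row0; have := H a; rewrite negbK => /eqP.
set w := row a (kermx B).
have hw : w *m B = 0 by rewrite /w -row_mul mulmx_ker row0.
pose c j := \sum_(b | enum_val b == j) w ord0 b.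
exists c; split.
- transitivity (\sum_b w ord0 b *: xs (enum_val b)).
    apply: esym; rewrite (partition_big (fun b => enum_val b) predT) //=.
    apply: eq_bigr => j _; rewrite scaler_suml; apply: eq_bigr => b /eqP ->.
    by [].
  apply: (etrans _ hw); rewrite mulmx_sum_row; apply: eq_bigr => b _; congr (_ *: _).
  by apply/rowP => i; rewrite !mxE.
- have [b hb] : exists b, w ord0 b != 0.
    apply/existsP; apply: contraNT ha => /existsPn H; apply/eqP/rowP => b.
    by rewrite [RHS]mxE; have := H b; rewrite negbK => /eqP.
  exists (enum_val b); rewrite /c (big_pred1 b) // => b'.
  by rewrite /= (inj_eq enum_val_inj).
- move=> j; apply: contraNN => /eqP hx; apply/eqP; rewrite /c big_pred0 // => b.
  apply/negbTE/eqP => hb; move: (enum_valP b); rewrite hb inE hx eqxx.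
  by [].
Qed.

Lemma reduce_step xs : feas xs -> opt xs -> (N < #|supp xs|)%N ->
  exists ys, [/\ feas ys, opt ys & (#|supp ys| < #|supp xs|)%N].
Proof.
move=> [hnn hsum] hopt hN.
have [c [hc0 [j1 hj1] hcS]] := dep_exists hN.
case: (@arg_maxP _ _ 'I_J j1 predT (fun j => `|c j|) isT) => j0 _ hmax.
have cj0 : c j0 != 0.
  rewrite -normr_gt0; apply: (lt_le_trans _ (hmax j1 isT)); by rewrite normr_gt0.
pose d j := c j / c j0.
have hd : forall j, -1 <= d j <= 1.
  move=> j; rewrite -ler_norml /d normrM normfV.
  by rewrite ler_pdivrMr ?normr_gt0 // mul1r; apply: hmax.
have hd0 : d j0 = 1 by rewrite /d divff.
have sumd : \sum_j d j *: xs j = 0.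
  rewrite (eq_bigr (fun j => (c j0)^-1 *: (c j *: xs j))); last first.
    by move=> j _; rewrite scalerA mulrC.
  by rewrite -scaler_sumr hc0 scaler0.
pose z (s : R) := fun j => (1 + s * d j) *: xs j.
have hz : forall s, -1 <= s <= 1 ->
    feas (z s) /\ Gs (z s) = Gs xs + s * \sum_j d j * F j (xs j).
  move=> s /andP [hs1 hs2]; have hpos : forall j, 0 <= 1 + s * d j.
    by move=> j; have /andP [h1 h2] := hd j; nra.
  split; first split.
  - by move=> j i; rewrite /z mxE; apply: mulr_ge0 => //; apply: hnn.
  - rewrite (eq_bigr (fun j => xs j + s *: (d j *: xs j))); last first.
      by move=> j _; rewrite /z scalerDl scale1r scalerA.
    by rewrite big_split /= -scaler_sumr sumd scaler0 addr0 hsum.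
  - rewrite /Gs (eq_bigr (fun j => F j (xs j) + s * (d j * F j (xs j)))).
      by rewrite big_split /= mulr_sumr.
    move=> j _; rewrite /z hFhom; [|exact: hpos|exact: hnn].
    by rewrite mulrDl mul1r -mulrA.
have [hf1 hG1] := hz 1 ltac:(lra).
have [hfm hGm] := hz (-1) ltac:(lra).
have hle := hopt _ hf1; rewrite hG1 in hle.
exists (z (-1)); split => //.
  by move=> ys hys; apply: (le_trans (hopt _ hys)); rewrite hGm; lra.
have hz0 : z (-1) j0 = 0 by rewrite /z hd0 mulN1r addrN scale0r.
have hsub : supp (z (-1)) \subset supp xs :\ j0.
  apply/fintype.subsetP => j; rewrite !inE; case: (eqVneq j j0) => [->|hj] /=.
    by rewrite hz0 eqxx.
  by apply: contraNN => /eqP hx; rewrite /z hx scaler0.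
have hj0S : j0 \in supp xs by rewrite inE; apply: hcS.
apply: (leq_ltn_trans (subset_leq_card hsub)).
by rewrite [X in (_ < X)%N](cardsD1 j0) hj0S.
Qed.

Lemma reduce n : forall xs, (#|supp xs| <= n)%N -> feas xs -> opt xs ->
  exists ys, [/\ feas ys, opt ys & (#|supp ys| <= N)%N].
Proof.
elim: n => [|n IH] xs hc hf ho.
  by exists xs; split => //; apply: leq_trans hc _.
case: (leqP #|supp xs| N) => hN; first by exists xs.
have [ys [hf' ho' hlt]] := reduce_step hf ho hN.
by apply: (IH ys) => //; rewrite -ltnS; apply: leq_trans hlt hc.
Qed.
End Reduce.

Lemma exists_opt (R : realType) (N J : nat) (hJ : (0 < J)%N) (F : 'I_J -> 'rV[R]_N -> R)
  (hFusc : forall j, usc_orthant (F j))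
  (hmono : forall j y z, nonneg_vec y -> nonneg_vec z -> F j y <= F j (y + z))
  (x : 'rV[R]_N) (hx : nonneg_vec x) : exists xs, feas x xs /\ opt F x xs.
Proof.
have feas_le : forall ys : 'I_J -> 'rV[R]_N, feas x ys ->
    forall (j : 'I_J) (i : 'I_N), ys j ord0 i <= x ord0 i.
  move=> ys [hn hs] j i; rewrite -hs summxE (bigD1 j) //= lerDl.
  by apply: sumr_ge0 => k _; apply: hn.
have Gbound : forall ys, feas x ys -> Gs F ys <= \sum_j F j x.
  move=> ys hys; apply: ler_sum => j _.
  have hnn : nonneg_vec (x - ys j).
    by move=> i; rewrite !mxE subr_ge0; apply: feas_le.
  by have := hmono j _ _ (hys.1 j) hnn; rewrite addrC subrK.
pose j0 := Ordinal hJ.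
pose xs1 := fun j : 'I_J => if j == j0 then x else 0.
have hf1 : feas x xs1.
  split.
    by move=> j i; rewrite /xs1; case: eqP => _; [exact: hx | rewrite mxE].
  by rewrite (bigD1 j0) //= /xs1 eqxx big1 ?addr0 // => j /negbTE ->.
pose E := [set r : R | exists2 ys, feas x ys & r = Gs F ys]%classic.
have hsup : has_sup E.
  split; first by exists (Gs F xs1), xs1.
  by exists (\sum_j F j x) => r [ys hys ->]; apply: Gbound.
set V := sup E.
have hV : forall ys, feas x ys -> Gs F ys <= V.
  by move=> ys hys; apply: sup_upper_bound => //; exists ys.
have Kc : compact [set v : 'rV['rV[R]_N]_J | forall j,
    [set w : 'rV[R]_N | forall i, `[0, x ord0 i]%classic (w ord0 i)]%classic (v ord0 j)]%classic.
  apply: (@rV_compact _ J (fun _ => [set w : 'rV[R]_N | forall i, `[0, x ord0 i]%classic (w ord0 i)]%classic)) => j.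
  by apply: (@rV_compact _ N (fun i => `[0, x ord0 i]%classic)) => i; apply: segment_compact.
pose B := fun e : R => [set v : 'rV['rV[R]_N]_J | feas x (fun j => v ord0 j) /\
   V - e < Gs F (fun j => v ord0 j)]%classic.
pose Fl := filter_from [set e : R | 0 < e]%classic B.
have FlF : ProperFilter Fl.
  apply: filter_from_proper; last first.
    move=> e e0; have [r [ys hys ->] hr] := sup_adherent e0 hsup.
    exists (\row_j ys j); rewrite /B /=.
    have -> : (fun j => (\row_j ys j) ord0 j) = ys by apply/funext => j; rewrite mxE.
    by [].
  apply: filter_from_filter; first by exists 1; rewrite /= ltr01.
  move=> e1 e2 h1 h2; exists (Num.min e1 e2); first by rewrite /= lt_min h1 h2.
  move=> v [hf hv]; split; split => //; apply: le_lt_trans hv;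
    by rewrite lerD2l lerN2 ge_min lexx ?orbT.
have FlK : Fl [set v : 'rV['rV[R]_N]_J | forall j,
    [set w : 'rV[R]_N | forall i, `[0, x ord0 i]%classic (w ord0 i)]%classic (v ord0 j)]%classic.
  exists 1; first by rewrite /= ltr01.
  move=> v [[hn hs] _] j i /=; rewrite in_itv /= hn.
  exact: (feas_le _ (conj hn hs) j i).
have [p [Kp clp]] := Kc Fl FlF FlK.
pose ps := fun j => p ord0 j.
have hps_nn : forall j, nonneg_vec (ps j).
  by move=> j i; have := Kp j i; rewrite /= in_itv /= => /andP [].
have FlB : forall e, 0 < e -> Fl (B e) by move=> e e0; exists e.
have Jpos : 0 < J%:R :> R by rewrite ltr0n.
have Jn0 : J%:R != 0 :> R by rewrite pnatr_eq0 -lt0n.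
have hsum : \sum_j ps j = x.
  apply/rowP => i; rewrite summxE; apply/eqP; apply: contraT => hne.
  pose dl := `|\sum_j ps j ord0 i - x ord0 i|.
  have dl0 : 0 < dl by rewrite normr_gt0 subr_eq0.
  have nB := nbhs_rvT (fun j => nbhs_rv_box (ps j) (divr_gt0 dl0 Jpos)).
  have [v [[[hvn hvs] _] hvB]] := clp _ _ (FlB 1 ltr01) nB.
  have : dl < dl.
    rewrite {1}/dl.
    have -> : x ord0 i = \sum_j v ord0 j ord0 i by rewrite -summxE hvs.
    rewrite -sumrB; apply: (le_lt_trans (ler_norm_sum _ _ _)).
    apply: (lt_le_trans (ltr_sum_ord (b := fun _ => dl / J%:R) hJ _)).
      by move=> j; rewrite distrC; apply: hvB.
    by rewrite sumr_const card_ord -[_ *+ J]mulr_natr divfK.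
  by rewrite ltxx.
have hopt : V <= Gs F ps.
  rewrite leNgt; apply/negP => hlt.
  pose e := (V - Gs F ps) / 2.
  have e0 : 0 < e by rewrite divr_gt0 // subr_gt0.
  have he : e * 2 = V - Gs F ps by rewrite /e divfK // pnatr_eq0.
  pose eps := e / J%:R.
  have eps0 : 0 < eps by rewrite divr_gt0.
  have nB : nbhs p [set v | forall j, [set w : 'rV[R]_N | nonneg_vec w ->
      F j w < F j (ps j) + eps]%classic (v ord0 j)]%classic.
    apply: (nbhs_rvT (P := fun j => [set w : 'rV[R]_N | nonneg_vec w ->
      F j w < F j (ps j) + eps]%classic)) => j.
    have [dd dd0 hdd] := hFusc j (ps j) (hps_nn j) eps eps0.
    have hb := nbhs_rv_box (ps j) dd0.
    by apply: (filterS _ hb) => w hw hwn; apply: hdd hwn hw.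
  have [v [[hvf hvG] hvB]] := clp _ _ (FlB e e0) nB.
  have : Gs F (fun j => v ord0 j) < Gs F ps + e.
    rewrite /Gs; apply: (lt_le_trans (ltr_sum_ord hJ (fun j => hvB j (hvf.1 j)))).
    by rewrite big_split /= sumr_const card_ord -[_ *+ J]mulr_natr /eps divfK.
  move: hvG he; clearbody e; lra.
exists ps; split; first by split.
by move=> ys hys; apply: le_trans (hV _ hys) hopt.
Qed.

Theorem proposition2 (R : realType) (N J : nat) (hN : (1 <= N)%N) (hJ : (1 <= J)%N)
  (F : 'I_J -> 'rV[R]_N -> R)
  (hFpos : forall j, nonneg_valued (F j))
  (hFusc : forall j, usc_orthant (F j))
  (hFconc : forall j, concave_orthant (F j))
  (hFhom : forall j, homogeneous1 (F j))
  (x : 'rV[R]_N) (hx : nonneg_vec x) :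
  exists xs : 'I_J -> 'rV[R]_N,
    [/\ forall j, nonneg_vec (xs j),
        \sum_(j < J) xs j = x,
        (forall ys : 'I_J -> 'rV[R]_N, (forall j, nonneg_vec (ys j)) ->
           \sum_(j < J) ys j = x ->
           \sum_(j < J) F j (ys j) <= \sum_(j < J) F j (xs j))
      & (#|[set j : 'I_J | xs j != 0%R]| <= N)%N].
Proof.
have hmono : forall j y z, nonneg_vec y -> nonneg_vec z -> F j y <= F j (y + z).
  move=> j y z hy hz; apply: le_trans (superadd (hFconc j) (hFhom j) hy hz).
  by rewrite lerDl; apply: hFpos.
have [xs0 [hf0 ho0]] := exists_opt hJ hFusc hmono hx.
have [ys [[hn hs] ho hc]] := reduce hFhom (leqnn _) hf0 ho0.
exists ys; split => //.
by move=> zs hzn hzs; apply: ho; split.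
Qed.
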